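(* For every arity $k\ge0$ (and also for unbounded arity), the $k$-ary unbiased black-box complexity of the extreme jump function $\mathrm{Jump}_{n/2-1}$ on $\{0,1\}^n$, $n$ even, is $\Omega(n)$.
   Context: For $x\in\{0,1\}^n$ let $|x|_1=\sum_ix_i$. For $n$ even, the extreme jump function $\mathrm{Jump}_{n/2-1}:\{0,1\}^n\to\mathbb{R}$ is given by $\mathrm{Jump}_{n/2-1}(x)=n$ if $|x|_1=n$, $=n/2$ if $|x|_1=n/2$, and $=0$ otherwise. For $k\ge 0$, a $k$-ary unbiased distribution is a family $(D(\cdot\mid y^{(1)},\dots,y^{(k)}))$ of probability distributions on $\{0,1\}^n$ such that $D(x\mid y^{(1)},\dots,y^{(k)})=D(x\oplus z\mid y^{(1)}\oplus z,\dots,y^{(k)}\oplus z)$ and $D(x\mid y^{(1)},\dots,y^{(k)})=D(\sigma(x)\mid\sigma(y^{(1)}),\dots,\sigma(y^{(k)}))$ for all $x,z,y^{(i)}$ and permutations $\sigma$ of $[n]$ ($\oplus$ bitwise XOR, $\sigma(x)=x_{\sigma(1)}\cdots x_{\sigma(n)}$). A $k$-ary unbiased black-box algorithm samples $x^{(0)}$ uniformly at random and queries $f(x^{(0)})$; then for $t=1,2,\dots$, depending only on $f(x^{(0)}),\dots,f(x^{(t-1)})$ (and its randomness), it chooses up to $k$ indices $i_1,\dots,i_k\in\{0,\dots,t-1\}$ and a $k$-ary unbiased distribution $D$, samples $x^{(t)}\sim D(\cdot\mid x^{(i_1)},\dots,x^{(i_k)})$ and queries $f(x^{(t)})$. The $k$-ary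 unbiased black-box complexity of $f$ is the infimum over such algorithms of the expected number of queries until a global maximizer of $f$ is first queried. Asymptotics are as $n\to\infty$. *)

(* Defs.v *)
From HB Require Import structures.
From mathcomp Require Import all_boot all_fingroup.
From Stdlib Require Import Reals.

Set Implicit Arguments.
Unset Strict Implicit.
Unset Printing Implicit Defensive.

HB.instance Definition _ :=
  Monoid.isComLaw.Build R R0 Rplus
    (fun a b c => Logic.eq_sym (Rplus_assoc a b c)) Rplus_comm Rplus_0_l.

Definition bits (n : nat) := {ffun 'I_n -> bool}.

Definition ones n (x : bits n) : nat := #|[pred i | x i]|.

Definition Jump n (x : bits n) : nat :=
  if ones x == n then n else if ones x == n./2 then n./2 else 0.

Definition bxor n (z x : bits n) : bits n := [ffun i => addb (x i) (z i)].

Definition bperm n (s : {perm 'I_n}) (x : bits n) : bits n := [ffun i => x (s i)].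

Definition distribution (T : finType) (p : T -> R) : Prop :=
  (forall x, (0 <= p x)%R) /\ \big[Rplus/R0]_(x : T) p x = 1%R.

(* An unbiased distribution family; D ys x is the probability of x given the
   (ordered) list ys = (y^(1),...,y^(m)) of parent points.  The arity is the
   length of the list actually supplied. *)
Definition unbiased n (D : seq (bits n) -> bits n -> R) : Prop :=
  [/\ forall ys, distribution (D ys),
      forall ys x z, D ys x = D (map (bxor z) ys) (bxor z x)
    & forall ys x (s : {perm 'I_n}), D ys x = D (map (bperm s) ys) (bperm s x)].

(* A policy: given the random seed and the history of fitness values
   f(x^(0)),...,f(x^(t-1)), choose the list of indices (i_1,...,i_m) and the
   unbiased distribution D. *)
Definition policy n (S : Type) :=
  S -> seq nat -> seq nat * (seq (bits n) -> bits n -> R).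

(* Validity of an algorithm of arity k (None = unbounded arity) with finite
   seed space S, seed distribution w and policy pol. *)
Definition valid_alg n (k : option nat) (S : finType) (w : S -> R)
  (pol : policy n S) : Prop :=
  distribution w /\
  forall s h, (0 < size h)%N ->
    [/\ all (fun i => i < size h)%N (pol s h).1,
        (if k is Some k' then (size (pol s h).1 <= k')%N else True)
      & unbiased (pol s h).2].

Definition step n (f : bits n -> nat) (S : Type) (pol : policy n S) (s : S)
  (hist : seq (bits n)) (x : bits n) : R :=
  let a := pol s (map f hist) in
  a.2 (map (fun i => nth x hist i) a.1) x.

(* probability (given the seed s) of the history whose REVERSED list of points
   is rs (latest point first) *)
Fixpoint hprob_rev n (f : bits n -> nat) (S : Type) (pol : policy n S) (s : S)
  (rs : seq (bits n)) : R :=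
  match rs with
  | [::] => 1%R
  | x :: rs' =>
      match rs' with
      | [::] => (/ (pow 2 n))%R
      | _ :: _ => (hprob_rev f pol s rs' * step f pol s (rev rs') x)%R
      end
  end.

Definition is_max n (f : bits n -> nat) (x : bits n) : bool :=
  [forall y, f y <= f x].

(* P(no global maximizer among x^(0),...,x^(t)) given seed s *)
Definition surv n (f : bits n -> nat) (S : Type) (pol : policy n S) (s : S)
  (t : nat) : R :=
  \big[Rplus/R0]_(xs : (t.+1).-tuple (bits n) | all (fun x => ~~ is_max f x) xs)
     hprob_rev f pol s (rev xs).

(* Partial sum  sum_{m < M+1} P(T > m)  of  E[T] = sum_{m >= 0} P(T > m),
   T = number of queries until a global maximizer is first queried. *)
Definition exp_partial n (f : bits n -> nat) (S : finType) (w : S -> R)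
  (pol : policy n S) (M : nat) : R :=
  (1 + \big[Rplus/R0]_(t < M) \big[Rplus/R0]_(s : S) (w s * surv f pol s t))%R.

(* Main.v *)
Require Import Defs.
From HB Require Import structures.
From mathcomp Require Import all_boot all_fingroup.
From Stdlib Require Import Reals.
From Stdlib Require Import Lra Lia.
From mathcomp Require Import zify.

Set Implicit Arguments.
Unset Strict Implicit.
Unset Printing Implicit Defensive.

Lemma big_Rle (I : Type) (r : seq I) (P : pred I) (F G : I -> R) :
  (forall i, P i -> (F i <= G i)%R) ->
  (\big[Rplus/R0]_(i <- r | P i) F i <= \big[Rplus/R0]_(i <- r | P i) G i)%R.
Proof.
move=> H; apply: (big_rec2 (fun a b => a <= b)%R); first lra.
move=> i y1 y2 Pi Hy; apply Rplus_le_compat; auto.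
Qed.

Lemma big_Rge0 (I : Type) (r : seq I) (P : pred I) (F : I -> R) :
  (forall i, P i -> (0 <= F i)%R) ->
  (0 <= \big[Rplus/R0]_(i <- r | P i) F i)%R.
Proof.
move=> H; apply: (big_ind (fun a => 0 <= a)%R); first lra.
  move=> a b; lra.
exact: H.
Qed.

Lemma big_Rmull (I : Type) (r : seq I) (P : pred I) (F : I -> R) a :
  (a * \big[Rplus/R0]_(i <- r | P i) F i = \big[Rplus/R0]_(i <- r | P i) (a * F i))%R.
Proof.
apply: (big_rec2 (fun x y => a * x = y)%R); first by rewrite Rmult_0_r.
move=> i y1 y2 _ <-; by rewrite Rmult_plus_distr_l.
Qed.

Lemma big_Rconst_seq (I : Type) (r : seq I) (c : R) :
  \big[Rplus/R0]_(i <- r) c = (INR (size r) * c)%R.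
Proof.
elim: r => [|x r IH]; first by rewrite big_nil /=; lra.
rewrite big_cons IH; change (size (x :: r)) with (S (size r)); rewrite S_INR; lra.
Qed.

Lemma big_Rconst (T : finType) (c : R) :
  \big[Rplus/R0]_(i : T) c = (INR #|T| * c)%R.
Proof. by rewrite big_Rconst_seq cardT enumT. Qed.

Lemma INR_expn2 n : INR (expn 2 n) = (2 ^ n)%R.
Proof.
elim: n => [|n IH]; first by rewrite expn0 /=.
by rewrite expnS mult_INR IH /=.
Qed.

Lemma card_bits n : #|bits n| = expn 2 n.
Proof. by rewrite /bits card_ffun card_bool card_ord. Qed.

Lemma sum_tuple_cons (X : finType) m (F : (m.+1).-tuple X -> R) :
  \big[Rplus/R0]_(rs : (m.+1).-tuple X) F rs =
  \big[Rplus/R0]_(x : X) \big[Rplus/R0]_(ys : m.-tuple X) F (cons_tuple x ys).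
Proof.
rewrite pair_big /=.
rewrite (reindex (fun p : X * m.-tuple X => cons_tuple p.1 p.2)) /=.
  by apply: eq_bigl.
apply: onW_bij.
exists (fun rs : (m.+1).-tuple X => (thead rs, [tuple of behead rs])).
  move=> [x ys] /=; congr (_, _); by apply: val_inj.
move=> rs; apply: val_inj => /=; case: rs => [[|a s] //=].
Qed.

Fixpoint pr n (K : seq (bits n) -> bits n -> R) (rs : seq (bits n)) : R :=
  match rs with
  | [::] => 1%R
  | x :: rs' =>
      match rs' with
      | [::] => (/ (pow 2 n))%R
      | _ :: _ => (pr K rs' * K (rev rs') x)%R
      end
  end.

Lemma hprob_pr n (f : bits n -> nat) (S : Type) (pol : policy n S) s rs :
  hprob_rev f pol s rs = pr (step f pol s) rs.
Proof.
elim: rs => [|x rs IH] //; case: rs IH => [|y rs] IH //.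
have E1 : hprob_rev f pol s (x :: y :: rs) = (hprob_rev f pol s (y :: rs) * step f pol s (rev (y :: rs)) x)%R by [].
have E2 : pr (step f pol s) (x :: y :: rs) = (pr (step f pol s) (y :: rs) * step f pol s (rev (y :: rs)) x)%R by [].
by rewrite E1 E2 IH.
Qed.

Lemma pr_cons n K (x : bits n) ys : ys != [::] -> pr K (x :: ys) = (pr K ys * K (rev ys) x)%R.
Proof. by case: ys. Qed.

Lemma pr_ge0 n K (rs : seq (bits n)) :
  (forall p x, (0 < size p < size rs)%N -> (0 <= K p x)%R) -> (0 <= pr K rs)%R.
Proof.
elim: rs => [|x rs IH] H /=; first lra.
case: rs IH H => [|y rs] IH H.
  apply: Rlt_le; apply: Rinv_0_lt_compat; apply: pow_lt; lra.
apply: Rmult_le_pos.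
  apply: IH => p z /andP [H1 H2]; apply: H; rewrite H1 /=; exact: ltnW.
apply: H; by rewrite size_rev /=.
Qed.

Lemma pr_xor n K (z : bits n) (rs : seq (bits n)) :
  (forall p x, (0 < size p < size rs)%N -> K (map (bxor z) p) (bxor z x) = K p x) ->
  pr K (map (bxor z) rs) = pr K rs.
Proof.
elim: rs => [|x rs IH] H //.
have [->|ne] := eqVneq rs [::]; first by [].
rewrite map_cons !pr_cons //; last by case: rs ne {IH H}.
rewrite IH; last first.
  move=> p u /andP [H1 H2]; apply: H; rewrite H1 /=; exact: ltnW.
rewrite -map_rev H //; rewrite size_rev ltnSn andbT; by case: (rs) ne.
Qed.

Lemma pr_total n K m :
  (forall p : seq (bits n), (0 < size p <= m)%N -> distribution (K p)) ->
  \big[Rplus/R0]_(rs : (m.+1).-tuple (bits n)) pr K rs = 1%R.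
Proof.
elim: m => [|m IH] H.
  rewrite sum_tuple_cons.
  have E : forall x : bits n, \big[Rplus/R0]_(ys : 0.-tuple (bits n)) pr K (cons_tuple x ys) = (/ (pow 2 n))%R.
    move=> x; rewrite (eq_bigr (fun _ => / (pow 2 n))%R); last first.
      by move=> ys _; rewrite (tuple0 ys).
    by rewrite big_Rconst card_tuple expn0 /=; lra.
  rewrite (eq_bigr _ (fun x _ => E x)) big_Rconst card_bits INR_expn2.
  apply: Rinv_r; apply: pow_nonzero; lra.
rewrite sum_tuple_cons exchange_big /=.
rewrite -[RHS](IH); last by move=> p /andP [H1 H2]; apply: H; rewrite H1; exact: leqW.
apply: eq_bigr => ys _.
rewrite (eq_bigr (fun x => pr K ys * K (rev ys) x)%R); last first.
  move=> x _; by case: ys => [[|a s] Hs].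
rewrite -big_Rmull.
have [_ ->] : distribution (K (rev ys)).
  apply: H; rewrite size_rev size_tuple; apply/andP; split; [exact: ltn0Sn | exact: leqnn].
by rewrite Rmult_1_r.
Qed.

Definition Kg n (S : Type) (pol : policy n S) (s : S) (H : seq (bits n) -> seq nat)
  (p : seq (bits n)) (x : bits n) : R :=
  let a := pol s (H p) in a.2 (map (fun i => nth x p i) a.1) x.

Lemma Kg_dist n k (S : finType) (w : S -> R) (pol : policy n S) s H p :
  valid_alg k w pol -> size (H p) = size p -> (0 < size p)%N ->
  distribution (Kg pol s H p).
Proof.
move=> [_ V] Hs Hp.
have := V s (H p); rewrite Hs => /(_ Hp) [Hidx _ [Hd _ _]].
set a := pol s (H p) in Hidx Hd *.
pose x0 : bits n := [ffun _ => false].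
have E : forall x, Kg pol s H p x = a.2 (map (fun i => nth x0 p i) a.1) x.
  move=> x; rewrite /Kg -/a; congr (a.2 _ x); apply/eq_in_map => i Hi.
  apply: set_nth_default; exact: (allP Hidx _ Hi).
have [D1 D2] := Hd (map (fun i => nth x0 p i) a.1).
split; first by move=> x; rewrite E.
by rewrite -D2; apply: eq_bigr => x _; rewrite E.
Qed.

Lemma nth_map_def (T1 T2 : Type) (f : T1 -> T2) (x : T1) s i :
  nth (f x) (map f s) i = f (nth x s i).
Proof. elim: s i => [|y s IH] [|i] //=. Qed.

Lemma Kg_xor n k (S : finType) (w : S -> R) (pol : policy n S) s H p z x :
  valid_alg k w pol -> (0 < size (H p))%N -> H (map (bxor z) p) = H p ->
  Kg pol s H (map (bxor z) p) (bxor z x) = Kg pol s H p x.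
Proof.
move=> [_ V] Hp Hz.
have [_ _ [_ U _]] := V s (H p) Hp.
rewrite /Kg Hz.
set a := pol s (H p).
rewrite (eq_map (fun i => nth_map_def (bxor z) x p i)).
rewrite (U _ x z) map_comp; by [].
Qed.

Lemma bxorK n (z x : bits n) : bxor z (bxor z x) = x.
Proof. apply/ffunP => i; rewrite !ffunE; by case: (x i); case: (z i). Qed.

Lemma bxor_inj n (z : bits n) : injective (bxor z).
Proof. exact: (can_inj (bxorK z)). Qed.

Lemma bxor_eq n (z a b : bits n) : (bxor z a == b) = (a == bxor z b).
Proof. apply/eqP/eqP => [<-|->]; by rewrite bxorK. Qed.

Lemma bxor_eq2 n (z a b : bits n) : (a == bxor z b) = (z == bxor a b).
Proof.
apply/eqP/eqP => E; apply/ffunP => j; move/ffunP: E => /(_ j); rewrite !ffunE;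
  by case: (a j); case: (b j); case: (z j).
Qed.

Definition onev n : bits n := [ffun _ => true].

Lemma ones_onev n : ones (onev n) = n.
Proof.
rewrite /ones -[RHS](card_ord n); apply: eq_card => i; by rewrite inE ffunE.
Qed.

Lemma Jump_le n (x : bits n) : (Jump x <= n)%N.
Proof.
rewrite /Jump; case: ifP => // _; case: ifP => // _; rewrite leq_half_double -addnn; lia.
Qed.

Lemma is_max_onev n (x : bits n) : (0 < n)%N -> is_max (@Jump n) x -> x = onev n.
Proof.
move=> n0 /forallP /(_ (onev n)).
rewrite /Jump ones_onev eqxx.
case: ifP => [/eqP H _|_].
  apply/ffunP => i; rewrite ffunE.
  have C := cardC [pred j | x j].
  rewrite -/(ones x) H card_ord in C.
  move: C; rewrite -[X in _ = X]addn0 => /eqP; rewrite eqn_add2l => /eqP C0.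
  have := card0_eq C0 i; rewrite !inE; by case: (x i).
case: ifP => _ H; last by move: H; rewrite leqn0 => /eqP H; rewrite H in n0.
exfalso; move: H; rewrite leqNgt => /negP; apply.
rewrite ltn_half_double -addnn; lia.
Qed.

Definition Kh n (S : Type) (pol : policy n S) (s : S) (h : seq nat) :=
  Kg pol s (fun p => take (size p) h).

Lemma Kh_dist n k (S : finType) (w : S -> R) (pol : policy n S) s h p :
  valid_alg k w pol -> (0 < size p)%N -> (size p <= size h)%N ->
  distribution (Kh pol s h p).
Proof.
move=> V H1 H2; apply: Kg_dist; [exact: V | exact: size_takel | done].
Qed.

Lemma Kh_pr_ge0 n k (S : finType) (w : S -> R) (pol : policy n S) s h (rs : seq (bits n)) :
  valid_alg k w pol -> size rs = size h -> (0 <= pr (Kh pol s h) rs)%R.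
Proof.
move=> V E; apply: pr_ge0 => p x /andP [H1 H2].
have [D _] := Kh_dist s V H1 (ltnW (leq_trans H2 (eq_leq E))).
exact: D.
Qed.

Lemma pr_Kh n (S : Type) (pol : policy n S) s (f : bits n -> nat) rs h :
  map f (rev rs) = take (size rs) h ->
  pr (Kg pol s (map f)) rs = pr (Kh pol s h) rs.
Proof.
elim: rs => [|x rs IH] E //.
have [->|ne] := eqVneq rs [::]; first by [].
rewrite !pr_cons // IH; last first.
  move: E; rewrite rev_cons map_rcons /= => E.
  have := congr1 (take (size rs)) E.
  rewrite take_takel ?leqnSn // -cats1 take_size_cat //; by rewrite size_map size_rev.
congr (_ * _)%R.
rewrite /Kh /Kg size_rev.
move: E; rewrite rev_cons map_rcons /= => E.
have := congr1 (take (size rs)) E.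
rewrite take_takel ?leqnSn // -cats1 take_size_cat; last by rewrite size_map size_rev.
by move=> <-.
Qed.

Lemma A_bound n k (S : finType) (w : S -> R) (pol : policy n S) s t (h : seq nat)
  (i : 'I_t.+1) :
  valid_alg k w pol -> size h = t.+1 ->
  \big[Rplus/R0]_(rs : (t.+1).-tuple (bits n) | tnth rs i == onev n) pr (Kh pol s h) rs
  = (/ (2 ^ n))%R.
Proof.
move=> V Hh.
set F := fun rs : (t.+1).-tuple (bits n) => pr (Kh pol s h) rs.
have tot : \big[Rplus/R0]_(rs : (t.+1).-tuple (bits n)) F rs = 1%R.
  apply: pr_total => p /andP [H1 H2]; apply: (Kh_dist s V H1); rewrite Hh; exact: leqW.
have inv : forall z (rs : (t.+1).-tuple (bits n)), F [tuple of map (bxor z) rs] = F rs.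
  move=> z rs; rewrite /F /=; apply: pr_xor => p x /andP [H1 H2].
  apply: (Kg_xor s x V).
    by rewrite size_takel // Hh; rewrite size_tuple in H2; exact: ltnW.
  by rewrite size_map.
set L := \big[Rplus/R0]_(rs | _) _.
have shift : forall z, L = \big[Rplus/R0]_(rs : (t.+1).-tuple (bits n) | tnth rs i == bxor z (onev n)) F rs.
  move=> z; rewrite /L (reindex_inj (h := fun rs : (t.+1).-tuple (bits n) => [tuple of map (bxor z) rs])).
    apply: eq_big => rs; first by rewrite tnth_map bxor_eq.
    by move=> _; rewrite -/(F _) inv.
  move=> r1 r2 E; apply: val_inj; move: (congr1 val E) => /= E'.
  by rewrite -(mapK (bxorK z) r1) E' mapK //; exact: bxorK.
have key : (INR (expn 2 n) * L = 1)%R.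
  rewrite -card_bits -big_Rconst (eq_bigr _ (fun z _ => shift z)).
  rewrite (eq_bigr (fun z => \big[Rplus/R0]_(rs : (t.+1).-tuple (bits n))
            (if tnth rs i == bxor z (onev n) then F rs else R0))); last by move=> z _; rewrite big_mkcond.
  rewrite exchange_big /= -tot; apply: eq_bigr => rs _.
  rewrite -big_mkcond (eq_bigl (fun z => z == bxor (tnth rs i) (onev n))); first by rewrite big_pred1_eq.
  by move=> z; rewrite bxor_eq2.
rewrite INR_expn2 in key.
have P : (2 ^ n <> 0)%R by apply: pow_nonzero; lra.
apply: (Rmult_eq_reg_l (2 ^ n)) => //; rewrite key Rinv_r //.
Qed.

Definition gv n (c : 'I_3) : nat :=
  if nat_of_ord c == 2 then n else if nat_of_ord c == 1 then n./2 else 0.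

Definition code n (x : bits n) : 'I_3 :=
  inord (if ones x == n then 2 else if ones x == n./2 then 1 else 0).

Lemma gv_code n (x : bits n) : gv n (code x) = Jump x.
Proof.
rewrite /gv /code /Jump.
have I2 : nat_of_ord (inord 2 : 'I_3) = 2 by rewrite inordK.
have I1 : nat_of_ord (inord 1 : 'I_3) = 1 by rewrite inordK.
have I0 : nat_of_ord (inord 0 : 'I_3) = 0 by rewrite inordK.
case: (ones x == n); first by rewrite I2.
case: (ones x == n./2); by rewrite ?I1 ?I0.
Qed.

Lemma Rle_addr a b : (0 <= b)%R -> (a <= a + b)%R.
Proof. lra. Qed.

Lemma surv_bound n k (S : finType) (w : S -> R) (pol : policy n S) s t :
  valid_alg k w pol -> (0 < n)%N ->
  (1 - INR (t.+1 * expn 3 t.+1) * / 2 ^ n <= surv (@Jump n) pol s t)%R.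
Proof.
move=> V n0.
set nm := fun x : bits n => ~~ is_max (@Jump n) x.
set Kf := step (@Jump n) pol s.
have E1 : surv (@Jump n) pol s t =
    \big[Rplus/R0]_(rs : (t.+1).-tuple (bits n) | all nm rs) pr Kf rs.
  rewrite /surv (reindex_inj (h := @rev_tuple t.+1 (bits n))); last first.
    move=> r1 r2 E; apply: val_inj; move: (congr1 val E) => /= /(congr1 rev).
    by rewrite !revK.
  apply: eq_big => rs /=; first by rewrite all_rev.
  by move=> _; rewrite revK hprob_pr.
have tot : \big[Rplus/R0]_(rs : (t.+1).-tuple (bits n)) pr Kf rs = 1%R.
  apply: pr_total => p /andP [H1 _].
  exact: (Kg_dist s (H := map (@Jump n)) V (size_map _ _) H1).
rewrite (bigID (fun rs : (t.+1).-tuple (bits n) => all nm rs)) /= in tot.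
set hits := \big[Rplus/R0]_(rs : (t.+1).-tuple (bits n) | ~~ all nm rs) pr Kf rs in tot.
rewrite E1; set A := \big[Rplus/R0]_(rs : (t.+1).-tuple (bits n) | all nm rs) pr Kf rs in tot *.
suff : (hits <= INR (t.+1 * expn 3 t.+1) * / 2 ^ n)%R by lra.
pose G := fun rs : (t.+1).-tuple (bits n) =>
  \big[Rplus/R0]_(i < t.+1) \big[Rplus/R0]_(c : (t.+1).-tuple 'I_3)
   (if tnth rs i == onev n then pr (Kh pol s (map (gv n) c)) rs else R0).
have Gge0 : forall rs, (0 <= G rs)%R.
  move=> rs; apply: big_Rge0 => i _; apply: big_Rge0 => c _; case: ifP => _; last lra.
  apply: (Kh_pr_ge0 s V); by rewrite size_map !size_tuple.
apply: (Rle_trans _ (\big[Rplus/R0]_(rs : (t.+1).-tuple (bits n)) G rs)).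
  rewrite /hits big_mkcond; apply: big_Rle => rs _; case: ifP => [H|_]; last exact: Gge0.
  have [x xin xmax] := allPn H.
  rewrite /nm negbK in xmax.
  have xone := is_max_onev n0 xmax.
  have [i0 Hi0] := tnthP _ _ xin.
  rewrite /G (bigD1 i0) //=.
  apply: Rle_trans (Rle_addr _ _); last first.
    apply: big_Rge0 => i _; apply: big_Rge0 => c _; case: ifP => _; last lra.
    apply: (Kh_pr_ge0 s V); by rewrite size_map !size_tuple.
  rewrite -Hi0 xone eqxx.
  pose c0 := map_tuple (@code n) (rev_tuple rs).
  rewrite (bigD1 c0) //=.
  apply: Rle_trans (Rle_addr _ _); last first.
    apply: big_Rge0 => c _.
    apply: (Kh_pr_ge0 s V); by rewrite size_map !size_tuple.
  apply: Req_le.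
  rewrite /Kf; change (step (@Jump n) pol s) with (Kg pol s (map (@Jump n))).
  apply: pr_Kh.
  rewrite take_oversize; last by rewrite size_map !size_tuple.
  rewrite /c0 /= -map_comp; apply: eq_map => y /=; by rewrite gv_code.
rewrite /G exchange_big /=.
under eq_bigr => i _ do rewrite exchange_big /=.
rewrite (eq_bigr (fun _ => \big[Rplus/R0]_(c : (t.+1).-tuple 'I_3) (/ 2 ^ n)%R)); last first.
  move=> i _; apply: eq_bigr => c _.
  rewrite -big_mkcond; apply: (A_bound s i V); by rewrite size_map size_tuple.
rewrite !big_Rconst card_tuple !card_ord mult_INR; apply: Req_le; ring.
Qed.

Lemma nat_bound n t : (t.+1 <= n %/ 4)%N -> (t.+1 * expn 3 t.+1 * 2 <= expn 2 n)%N.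
Proof.
move=> Ht.
have h1 : (t.+1 <= expn 2 t.+1)%N := ltnW (ltn_expl _ (isT : (1 < 2)%N)).
have h2 : (expn 2 t.+1 * expn 3 t.+1 <= expn 8 t.+1)%N by rewrite -expnMn leq_exp2r.
have h3 : expn 8 t.+1 = expn 2 (3 * t.+1) by rewrite expnM.
have h4 : (expn 2 (3 * t.+1) * 2 <= expn 2 n)%N.
  rewrite -expnSr leq_exp2l //; lia.
apply: leq_trans h4; rewrite -h3.
apply: leq_mul => //; apply: leq_trans h2; apply: leq_mul => //.
Qed.

Theorem lemma11 :
  forall k : option nat,
  exists c : R, (0 < c)%R /\
  exists N : nat,
  forall n : nat, (N <= n)%N -> ~~ odd n ->
  forall (S : finType) (w : S -> R) (pol : policy n S),
    @valid_alg n k S w pol ->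
    exists M : nat, (c * INR n <= exp_partial (@Jump n) w pol M)%R.
Proof.
move=> k; exists (/8)%R; split; first lra.
exists 1%N => n Hn _ S w pol V.
exists (n %/ 4); set M := n %/ 4.
have [[Hw1 Hw2] _] := V.
have term : forall t, (t < M)%N ->
    (/2 <= \big[Rplus/R0]_(s : S) (w s * surv (@Jump n) pol s t))%R.
  move=> t Ht.
  have nb := nat_bound Ht.
  have P : (0 < 2 ^ n)%R by apply: pow_lt; lra.
  have Rb : (INR (t.+1 * expn 3 t.+1) * / 2 ^ n <= / 2)%R.
    have := le_INR _ _ (elimT leP nb); rewrite mult_INR INR_expn2 => Hb.
    apply: (Rmult_le_reg_l (2 * 2 ^ n)); first lra.
    replace (2 * 2 ^ n * (INR (t.+1 * expn 3 t.+1) * / 2 ^ n))%R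
      with (2 * INR (t.+1 * expn 3 t.+1))%R by (field; lra).
    replace (2 * 2 ^ n * / 2)%R with (2 ^ n)%R by field.
    simpl INR in Hb; lra.
  apply: (Rle_trans _ (\big[Rplus/R0]_(s : S) (w s * / 2)%R)).
    rewrite (eq_bigr (fun s => / 2 * w s)%R); last by move=> s _; rewrite Rmult_comm.
    rewrite -big_Rmull Hw2; lra.
  apply: big_Rle => s _; apply: Rmult_le_compat_l; first exact: Hw1.
  have := surv_bound s t V Hn; lra.
rewrite /exp_partial.
apply: (Rle_trans _ (1 + \big[Rplus/R0]_(t < M) (/2))%R).
  rewrite big_Rconst card_ord.
  have : (n <= 4 * M + 3)%N by rewrite /M; lia.
  move/leP/le_INR; rewrite plus_INR mult_INR; simpl INR; lra.
apply: Rplus_le_compat_l; apply: big_Rle => t _; apply: term; exact: ltn_ord.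
Qed.
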